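(* Let $T_{a_1\dots a_r}\neq0$ be a rank-$r$ tensor, $r\ge1$. Then $T\in\mathcal{DP}$ if and only if $T_{a_1\dots a_r}u_1^{a_1}\cdots u_r^{a_r}>0$ for every set $u_1,\dots,u_r$ of timelike future-pointing vectors.
   Context: Lorentzian metric of signature $(+,-,\dots,-)$ with time orientation; timelike: $v\cdot v>0$; causal: $v\ne0$, $v\cdot v\ge0$. $\mathcal{DP}$: tensors $T$ with $T_{a_1\dots a_r}u_1^{a_1}\cdots u_r^{a_r}\ge0$ for all causal future-pointing $u_1,\dots,u_r$. *)

(* Defs.v *)
(* Minkowski space R^(n+2) in an orthonormal basis e_0,...,e_(n+1)
   with metric diag(+,-,...,-) and time orientation given by e_0. *)
From HB Require Import structures.
From mathcomp Require Import all_boot all_order all_algebra.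
From mathcomp Require Import reals.
Set Implicit Arguments. Unset Strict Implicit. Unset Printing Implicit Defensive.
Import Order.TTheory GRing.Theory Num.Theory.
Local Open Scope ring_scope.

Definition vec (R : realType) (n : nat) := 'I_n.+2 -> R.

Definition mdot (R : realType) (n : nat) (u v : vec R n) : R :=
  u ord0 * v ord0 - \sum_(i : 'I_n.+2 | i != ord0) u i * v i.

Definition timelike (R : realType) (n : nat) (v : vec R n) : Prop :=
  0 < mdot v v.

Definition causal (R : realType) (n : nat) (v : vec R n) : Prop :=
  (exists i, v i != 0) /\ 0 <= mdot v v.

Definition future_pointing (R : realType) (n : nat) (v : vec R n) : Prop :=
  0 < v ord0.

(* a rank-r covariant tensor: components T_{a_1...a_r}, indices a : 'I_r -> 'I_(n+2) *)
Definition tensor (R : realType) (n r : nat) := {ffun 'I_r -> 'I_n.+2} -> R.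

Definition contract (R : realType) (n r : nat) (T : tensor R n r)
  (u : 'I_r -> vec R n) : R :=
  \sum_(a : {ffun 'I_r -> 'I_n.+2}) T a * \prod_(i < r) u i (a i).

Definition DP (R : realType) (n r : nat) (T : tensor R n r) : Prop :=
  forall u : 'I_r -> vec R n,
    (forall i, causal (u i) /\ future_pointing (u i)) -> 0 <= contract T u.

(* Main.v *)
Require Import Defs.
From HB Require Import structures.
From mathcomp Require Import all_boot all_order all_algebra.
From mathcomp Require Import reals.
From mathcomp Require Import ring lra.
Import Order.TTheory GRing.Theory Num.Theory.
Local Open Scope ring_scope.

Section Aux.
Variables (R : realType) (n r : nat).
Implicit Types (T : tensor R n r) (u : 'I_r -> vec R n).

Definition e0 : vec R n := fun j => (j == ord0)%:R.

Lemma contract_ext T u v : (forall i j, u i j = v i j) -> contract T u = contract T v.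
Proof. move=> H; apply: eq_bigr => a _; congr (_ * _); apply: eq_bigr => i _; exact: H. Qed.

Definition upd u k (y : vec R n) : 'I_r -> vec R n := fun i => if i == k then y else u i.

Lemma prod_upd u k y (a : {ffun 'I_r -> 'I_n.+2}) :
  \prod_(i < r) upd u k y i (a i) = y (a k) * \prod_(i < r | i != k) u i (a i).
Proof.
rewrite (bigD1 k) //= /upd eqxx; congr (_ * _).
by apply: eq_bigr => i /negbTE ->.
Qed.

Lemma contract_lin T u k (y z : vec R n) (al be : R) :
  contract T (upd u k (fun j => al * y j + be * z j)) =
  al * contract T (upd u k y) + be * contract T (upd u k z).
Proof.
rewrite /contract !mulr_sumr -big_split /=; apply: eq_bigr => a _.
rewrite !prod_upd; ring.
Qed.

Lemma mdot_add (x w : vec R n) (s : R) :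
  mdot (fun j => x j + s * w j) (fun j => x j + s * w j) =
  mdot x x + 2 * s * mdot x w + s ^+ 2 * mdot w w.
Proof.
rewrite /mdot.
have -> : \sum_(i : 'I_n.+2 | i != ord0) (x i + s * w i) * (x i + s * w i) =
  \sum_(i : 'I_n.+2 | i != ord0) x i * x i + 2 * s * \sum_(i : 'I_n.+2 | i != ord0) x i * w i
  + s ^+ 2 * \sum_(i : 'I_n.+2 | i != ord0) w i * w i.
  rewrite !mulr_sumr -!big_split; apply: eq_bigr => i _.
  rewrite /=; ring.
ring.
Qed.

Lemma prod_pert (m : nat) (x y : 'I_m -> R) (e : R) : 0 <= e -> e <= 1 ->
  `|\prod_(i < m) (x i + e * y i)| <= \prod_(i < m) (`|x i| + `|y i|) /\
  `|\prod_(i < m) (x i + e * y i) - \prod_(i < m) x i| <= e * \prod_(i < m) (`|x i| + `|y i|).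
Proof.
move=> e0 e1; elim: m x y => [|m IH] x y.
  by rewrite !big_ord0 subrr normr0 normr1 mulr1.
rewrite !big_ord_recr /=.
have [H1 H2] := IH (fun i => x (widen_ord (leqnSn m) i)) (fun i => y (widen_ord (leqnSn m) i)).
set P := \prod_(i < m) _ in H1 H2 *.
set Q := \prod_(i < m) x _ in H2 *.
set M := \prod_(i < m) _ in H1 H2 *.
set a := x ord_max; set b := y ord_max.
have Ma : `|a| <= `|a| + `|b| by rewrite lerDl.
have M0 : 0 <= M := le_trans (normr_ge0 _) H1.
have Nab : `|a + e * b| <= `|a| + `|b|.
  apply: le_trans (ler_normD _ _) _; rewrite lerD2l normrM (ger0_norm e0).
  by rewrite -[leRHS]mul1r ler_wpM2r.
split.
  by rewrite normrM; apply: ler_pM.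
have -> : P * (a + e * b) - Q * a = (P - Q) * a + e * (P * b) by ring.
apply: le_trans (ler_normD _ _) _.
rewrite !normrM (ger0_norm e0).
have h1 : `|P - Q| * `|a| <= e * M * `|a| by apply: ler_wpM2r.
have h2 : `|P| * `|b| <= M * `|b| by apply: ler_wpM2r.
have h3 : e * (`|P| * `|b|) <= e * (M * `|b|) by apply: ler_wpM2l.
apply: le_trans (lerD h1 h3) _.
by rewrite le_eqVlt; apply/orP; left; apply/eqP; ring.
Qed.

Definition Cb T u (d : 'I_r -> vec R n) :=
  \sum_(a : {ffun 'I_r -> 'I_n.+2}) `|T a| * \prod_(i < r) (`|u i (a i)| + `|d i (a i)|).

Lemma contract_pert T u d e : 0 <= e -> e <= 1 ->
  `|contract T (fun i j => u i j + e * d i j) - contract T u| <= e * Cb T u d.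
Proof.
move=> e0 e1; rewrite /contract /Cb -sumrB mulr_sumr.
apply: le_trans (ler_norm_sum _ _ _) _; apply: ler_sum => a _.
rewrite -mulrBr normrM mulrCA; apply: ler_wpM2l => //.
by have [_ ->] := prod_pert _ (fun i => u i (a i)) (fun i => d i (a i)) e e0 e1.
Qed.

Lemma contract_lin1 T u k (y z : vec R n) (be : R) :
  contract T (upd u k (fun j => y j + be * z j)) =
  contract T (upd u k y) + be * contract T (upd u k z).
Proof.
rewrite /contract !mulr_sumr -big_split /=; apply: eq_bigr => a _.
rewrite !prod_upd; ring.
Qed.

Lemma mdot_e0 (x : vec R n) : mdot x e0 = x ord0.
Proof.
rewrite /mdot /e0 eqxx mulr1 big1 ?subr0 // => i /negbTE ->; by rewrite mulr0.
Qed.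

Lemma mdot_e0e0 : mdot e0 e0 = 1.
Proof. by rewrite mdot_e0 /e0 eqxx. Qed.

Lemma e0_tf : timelike e0 /\ future_pointing e0.
Proof. by rewrite /timelike /future_pointing mdot_e0e0 /e0 eqxx ltr01. Qed.

Lemma tf_causal (v : vec R n) : timelike v /\ future_pointing v -> causal v /\ future_pointing v.
Proof.
move=> [h1 h2]; split => //; split; last exact: ltW.
by exists ord0; rewrite gt_eqF.
Qed.

Lemma shift_tf (w : vec R n) : exists c, 0 < c /\
  timelike (fun j => w j + c * e0 j) /\ future_pointing (fun j => w j + c * e0 j).
Proof.
set q := mdot w w; set w0 := w ord0.
exists (`|q| + 2 * `|w0| + 1); split.
  by rewrite ltr_wpDl // addr_ge0 // mulr_ge0.
rewrite /timelike /future_pointing mdot_add mdot_e0 mdot_e0e0 /e0 eqxx mulr1 -/q -/w0.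
set c := _ + 1.
have hq : - `|q| <= q by rewrite lerNnormlW.
have hw : - `|w0| <= w0 by rewrite lerNnormlW.
have hw' : w0 <= `|w0| by exact: ler_norm.
have a0 : 0 <= `|q| := normr_ge0 _.
have b0 : 0 <= `|w0| := normr_ge0 _.
rewrite mulr1n.
split; last by rewrite /c; lra.
have hc : 1 <= c by rewrite /c; lra.
have : c * (w0 + `|w0|) >= 0 by apply: mulr_ge0; lra.
have : c * (c - 2 * `|w0|) >= c * 1 * (`|q| + 1).
  rewrite -mulrA ler_wpM2l /c; lra.
nra.
Qed.


Lemma pert_tf (x w : vec R n) : timelike x /\ future_pointing x -> exists t, 0 < t /\
  forall s, (s = t \/ s = -t) ->
  timelike (fun j => x j + s * w j) /\ future_pointing (fun j => x j + s * w j).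
Proof.
rewrite /timelike /future_pointing => -[hQ hx].
set Q := mdot x x in hQ *; set x0 := x ord0 in hx *.
set B := mdot x w; set q := mdot w w; set w0 := w ord0.
set K := 2 * `|B| + `|q|.
have K0 : 0 <= K by rewrite /K addr_ge0 // mulr_ge0.
set a := K / Q; set b := `|w0| / x0.
have a0 : 0 <= a by rewrite /a divr_ge0 // ltW.
have b0 : 0 <= b by rewrite /b divr_ge0 // ltW.
set D := 1 + a + b.
have D0 : 0 < D by rewrite /D; lra.
exists D^-1; split; first by rewrite invr_gt0.
have t1 : D^-1 <= 1 by rewrite invf_le1 //; rewrite /D; lra.
have ta : D^-1 * a < 1 by rewrite mulrC ltr_pdivrMr // mul1r /D; lra.
have tb : D^-1 * b < 1 by rewrite mulrC ltr_pdivrMr // mul1r /D; lra.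
have tK : D^-1 * K < Q.
  have -> : K = a * Q by rewrite /a divfK // gt_eqF.
  by rewrite mulrA -[ltRHS]mul1r ltr_pM2r.
have tw : D^-1 * `|w0| < x0.
  have -> : `|w0| = b * x0 by rewrite /b divfK // gt_eqF.
  by rewrite mulrA -[ltRHS]mul1r ltr_pM2r.
have t0 : 0 < D^-1 by rewrite invr_gt0.
move: t1 tK tw t0; set t := D^-1 => t1 tK tw t0.
move=> s hs.
have ns : `|s| = t by case: hs => ->; rewrite ?normrN gtr0_norm.
rewrite mdot_add -/Q -/B -/q -/x0 -/w0; split.
  have h1 : - (2 * t * `|B|) <= 2 * s * B.
    by apply: lerNnormlW; rewrite !normrM ns (ger0_norm (ler0n _ 2)).
  have h2 : - (t * `|q|) <= s ^+ 2 * q.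
    apply: lerNnormlW; rewrite normrM normrX ns.
    by rewrite expr2 -mulrA ler_piMl // mulr_ge0 // ltW.
  rewrite /K in tK; lra.
have h3 : - (t * `|w0|) <= s * w0 by apply: lerNnormlW; rewrite normrM ns.
lra.
Qed.


Definition TF (v : vec R n) := timelike v /\ future_pointing v.

Lemma upd_same u k : forall i j, upd u k (u k) i j = u i j.
Proof. by move=> i j; rewrite /upd; case: eqP => // ->. Qed.

Lemma zero_prop T : DP T -> forall x, (forall i, TF (x i)) -> contract T x = 0 ->
  forall k w, contract T (upd x k w) = 0.
Proof.
move=> hD x hx h0 k w.
have [t [t0 ht]] := pert_tf _ w (hx k).
have E s : contract T (upd x k (fun j => x k j + s * w j)) = s * contract T (upd x k w).
  by rewrite contract_lin1 (contract_ext T _ _ (upd_same x k)) h0 add0r.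
have G s : (s = t \/ s = -t) -> 0 <= s * contract T (upd x k w).
  move=> hs; rewrite -E; apply: hD => i; rewrite /upd; case: eqP => _.
    apply: tf_causal; exact: ht.
  apply: tf_causal; exact: hx.
have g1 := G t (or_introl erefl); have g2 := G (-t) (or_intror erefl).
rewrite mulNr oppr_ge0 in g2.
apply/eqP; rewrite eq_le; apply/andP; split.
  by rewrite -(pmulr_rle0 _ t0).
by rewrite -(pmulr_rge0 _ t0).
Qed.

Definition mix m (v u : 'I_r -> vec R n) : 'I_r -> vec R n :=
  fun i => if (i < m)%N then v i else u i.

Lemma phase1 T u : DP T -> (forall i, TF (u i)) -> contract T u = 0 ->
  forall m, (m <= r)%N -> forall v, (forall i, TF (v i)) -> contract T (mix m v u) = 0.
Proof.
move=> hD hu h0; elim=> [|m IH] hm v hv.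
  by rewrite -h0; apply: contract_ext => i j; rewrite /mix.
have hmr : (m < r)%N by [].
set k := Ordinal hmr.
have -> : contract T (mix m.+1 v u) = contract T (upd (mix m v u) k (v k)).
  apply: contract_ext => i j; rewrite /mix /upd ltnS leq_eqVlt.
  case: (eqVneq i k) => [->|ne] /=; first by rewrite eqxx.
  have -> : (nat_of_ord i == m) = false.
    by apply/negbTE; apply: contra ne => /eqP e; apply/eqP/val_inj.
  by [].
apply: zero_prop => //; last by apply: IH => //; exact: ltnW.
by move=> i; rewrite /mix; case: ifP.
Qed.

Lemma phase2 T u : DP T -> (forall i, TF (u i)) -> contract T u = 0 ->
  forall m, (m <= r)%N -> forall w v, (forall i, TF (v i)) -> contract T (mix m w v) = 0.
Proof.
move=> hD hu h0; elim=> [|m IH] hm w v hv.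
  rewrite -(@phase1 T u hD hu h0 r (leqnn r) v hv).
  by apply: contract_ext => i j; rewrite /mix ltn_ord.
have hmr : (m < r)%N by [].
set k := Ordinal hmr.
have [c [c0 hc]] := shift_tf (w k).
have -> : contract T (mix m.+1 w v) =
   contract T (upd (mix m w v) k (fun j => (w k j + c * e0 j) + (-c) * e0 j)).
  apply: contract_ext => i j; rewrite /mix /upd ltnS leq_eqVlt.
  case: (eqVneq i k) => [->|ne] /=; first by rewrite eqxx; ring.
  have -> : (nat_of_ord i == m) = false.
    by apply/negbTE; apply: contra ne => /eqP e; apply/eqP/val_inj.
  by [].
have F y : TF y -> contract T (upd (mix m w v) k y) = 0.
  move=> hy.
  have -> : contract T (upd (mix m w v) k y) = contract T (mix m w (upd v k y)).
    apply: contract_ext => i j; rewrite /mix /upd.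
    case: (eqVneq i k) => [->|ne] //=; by rewrite ltnn.
  apply: IH; first exact: ltnW.
  by move=> i; rewrite /upd; case: eqP.
rewrite contract_lin1 F // F ?mulr0 ?addr0 //; exact: e0_tf.
Qed.

Lemma contract_basis T (a : {ffun 'I_r -> 'I_n.+2}) :
  contract T (fun i j => (j == a i)%:R) = T a.
Proof.
rewrite /contract (bigD1 a) //= [X in _ + X]big1 ?addr0.
  by rewrite big1 ?mulr1 // => i _; rewrite eqxx.
move=> b hb.
case: (pickP (fun i => b i != a i)) => [i Hi|H].
  by rewrite (bigD1 i) //= (negbTE Hi) mul0r mulr0.
have E : b = a by apply/ffunP => i; apply/eqP; move: (H i) => /= /negbFE.
by rewrite E eqxx in hb.
Qed.

End Aux.

Theorem mainTheorem16 (R : realType) (n r : nat) (T : tensor R n r) :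
  (0 < r)%N -> (exists a, T a != 0) ->
  (DP T <->
   forall u : 'I_r -> vec R n,
     (forall i, timelike (u i) /\ future_pointing (u i)) -> 0 < contract T u).
Proof.
move=> _ [a ha]; split.
- move=> hD u hu.
  have hge : 0 <= contract T u by apply: hD => i; apply: tf_causal; exact: hu.
  rewrite lt_def hge andbT; apply/negP => /eqP h0.
  have := @phase2 R n r T u hD hu h0 r (leqnn r) (fun i j => (j == a i)%:R) u hu.
  have -> : contract T (@mix R n r r (fun i j => (j == a i)%:R) u) =
            contract T (fun i j => (j == a i)%:R).
    by apply: contract_ext => i j; rewrite /mix ltn_ord.
  by rewrite contract_basis; apply/eqP.
- move=> H u hu.
  rewrite leNgt; apply/negP => neg.
  set f0 := contract T u in neg.
  set C := @Cb R n r T u (fun _ => e0 R n).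
  have C0 : 0 <= C.
    rewrite /C /Cb sumr_ge0 // => b _; rewrite mulr_ge0 // prodr_ge0 // => i _.
    by rewrite addr_ge0.
  have Dp : 0 < - f0 + C + 1 by lra.
  set e := - f0 / (- f0 + C + 1).
  have e0' : 0 < e by rewrite /e divr_gt0 // oppr_gt0.
  have e1 : e <= 1 by rewrite /e ler_pdivrMr // mul1r; lra.
  have eD : e * (- f0 + C + 1) = - f0 by rewrite /e divfK // gt_eqF.
  have hb := @contract_pert R n r T u (fun _ => e0 R n) e (ltW e0') e1.
  have hp : 0 < contract T (fun i j => u i j + e * e0 R n j).
    apply: H => i; have [[_ hq] hf] := hu i.
    rewrite /timelike /future_pointing mdot_add mdot_e0 mdot_e0e0 /e0 eqxx mulr1n mulr1.
    rewrite /future_pointing in hf.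
    have : 0 < e * u i ord0 by rewrite mulr_gt0.
    have : 0 <= e ^+ 2 by rewrite sqr_ge0.
    split; lra.
  move: hb; rewrite -/C -/f0 => /ler_normlW hb.
  have : e * C = - f0 - e * (- f0 + 1) by rewrite -{1}eD; ring.
  have : 0 < e * (- f0 + 1) by rewrite mulr_gt0 //; lra.
  lra.
Qed.
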